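(* Let $n\ge 2$, $n\ge d\ge 1$, let $\{\tilde V(\theta):\theta\in\Theta\}$ be an ORP of $O(d+1)$ to $e_{d+1}$ and $\{\tilde V_d(\phi):\phi\in\Phi\}$ an ORP of $O(d)$ to $e_d$, with $V^{(k)}$ defined below. Let $\gamma\in\mathbb{R}$ with $|\gamma|\le 1$, $\theta_1,\dots,\theta_{n-1}\in\Theta$, $\theta_n\in\Phi$. Define the $(d-1)\times n$ matrix $\hat C$ and the $n\times n$ matrix $A$ by $$\begin{pmatrix}\hat C\\ A\end{pmatrix}=V^{(1)}(\theta_1)\cdots V^{(n-1)}(\theta_{n-1})V^{(n)}(\theta_n)\begin{pmatrix}0_{d-1,n}\\ P(\gamma)\end{pmatrix},$$ where $P(\gamma)$ is the $n\times n$ matrix with $P_{2,1}=\gamma$, $P_{k+1,k}=1$ for $2\le k<n$, $P_{1,n}=1$ and all other entries $0$, and let $C$ be the $d\times n$ matrix with first row $C_{1,j}=\sqrt{1-\gamma^2}\,\delta_{1,j}$ and rows $2,\dots,d$ equal to $\hat C$. Then $(A,C)$ is a HOON pair.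
   Context: ${}^*$ denotes transpose. $(A,C)$ is HOON if $A$ is upper Hessenberg ($A_{i,j}=0$ for $i>j+1$), $C_{1,j}=0$ for $j>1$, and $A^*A=\mathbb{I}_n-C^*C$. An orthogonal reduction parameterization (ORP) of $O(m)$ to $e_k$ is a family $\{\tilde Q(\theta):\theta\in\Theta\}$, $\Theta\subset\mathbb{R}^{m-1}$, of real orthogonal $m\times m$ matrices such that for every nonzero $h\in\mathbb{R}^m$ there is a unique $\theta(h)$ with $\tilde Q(\theta)^*h=\|h\|e_k$. For $\theta\in\Theta$ write $\tilde V(\theta)=\begin{pmatrix}\tilde O&x\\ y^*&\mu\end{pmatrix}$ ($\tilde O\in\mathbb{R}^{d\times d}$, $x,y\in\mathbb{R}^d$, $\mu\in\mathbb{R}$) and for $1\le k<n$ set $V^{(k)}(\theta)=\begin{pmatrix}\tilde O&0_{d,k-1}&x\\ 0_{k-1,d}&\mathbb{I}_{k-1}&0_{k-1,1}\\ y^*&0_{1,k-1}&\mu\end{pmatrix}\oplus\mathbb{I}_{n-k-1}$, an $(n+d-1)\times(n+d-1)$ matrix; set $V^{(n)}(\phi)=\tilde V_d(\phi)\oplus\mathbb{I}_{n-1}$. *)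

(* Defs.v *)
From HB Require Import structures.
From mathcomp Require Import all_boot all_order all_algebra.
From mathcomp Require Import reals.
Set Implicit Arguments. Unset Strict Implicit. Unset Printing Implicit Defensive.
Import Order.TTheory GRing.Theory Num.Theory.
Local Open Scope ring_scope.

Section Defs.
Variable R : realType.

(* entry (i,j) (0-based nat indices) of a matrix, 0 outside the range *)
Definition mxe (p q : nat) (M : 'M[R]_(p, q)) (i j : nat) : R :=
  match (insub i : option 'I_p), (insub j : option 'I_q) with
  | Some a, Some b => M a b
  | _, _ => 0
  end.

Definition vnorm (m : nat) (h : 'cV[R]_m) : R := Num.sqrt (\sum_i h i 0 ^+ 2).

(* e_k (1-based k) in R^m *)
Definition evec (m k : nat) : 'cV[R]_m := \col_(i < m) ((i : nat) == k.-1)%:R.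

Definition orthogonal_mx (m : nat) (Q : 'M[R]_m) : Prop := Q^T *m Q = 1%:M.

Definition ORP (m k : nat) (Theta : 'cV[R]_(m.-1) -> Prop)
    (Q : 'cV[R]_(m.-1) -> 'M[R]_m) : Prop :=
  (forall t, Theta t -> orthogonal_mx (Q t)) /\
  (forall h : 'cV[R]_m, h != 0 ->
     exists t, [/\ Theta t, (Q t)^T *m h = vnorm h *: evec m k &
       forall t', Theta t' -> (Q t')^T *m h = vnorm h *: evec m k -> t' = t]).

Definition HOON (n m : nat) (A : 'M[R]_n) (C : 'M[R]_(m, n)) : Prop :=
  [/\ (forall i j : 'I_n, (j.+1 < i)%N -> A i j = 0),
      (forall (i : 'I_m) (j : 'I_n), (i : nat) = 0%N -> (0 < j)%N -> C i j = 0) &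
      A^T *m A = 1%:M - C^T *m C].

(* index map of the embedding of ~V (size d+1) into V^(k) (size n+d-1):
   0-based rows 0..d-1 -> O-block, row d+k-1 -> last row/col of ~V *)
Definition vkidx (d k i : nat) : option nat :=
  if (i < d)%N then Some i else if i == (d + k).-1 then Some d else None.

(* V^(k)(theta), 1 <= k < n, given Vt = ~V(theta); entrywise form of the
   block matrix of the paper *)
Definition Vk (d n k : nat) (Vt : 'M[R]_(d.+1)) : 'M[R]_(d.-1 + n) :=
  \matrix_(i, j)
    match vkidx d k i, vkidx d k j with
    | Some a, Some b => mxe Vt a b
    | _, _ => ((i : nat) == j)%:R
    end.

Definition Vn (d n : nat) (Vd : 'M[R]_d) : 'M[R]_(d.-1 + n) :=
  \matrix_(i, j)
    if ((i < d) && (j < d))%N then mxe Vd i j else ((i : nat) == j)%:R.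

(* P(gamma); 1-based: P_{2,1} = gamma, P_{k+1,k} = 1 (2<=k<n), P_{1,n} = 1 *)
Definition Pmat (n : nat) (gamma : R) : 'M[R]_n :=
  \matrix_(i, j)
    if ((i : nat) == 1%N) && ((j : nat) == 0%N) then gamma
    else if ((2 <= i)%N && ((j : nat) == i.-1)) then 1
    else if ((i : nat) == 0%N) && ((j : nat) == n.-1) then 1
    else 0.

Definition Crow (n : nat) (gamma : R) : 'rV[R]_n :=
  \row_(j < n) (if (j : nat) == 0%N then Num.sqrt (1 - gamma ^+ 2) else 0).

End Defs.
Arguments ORP {R} m k Theta Q.

(* Main.v *)
Require Import Defs.
From HB Require Import structures.
From mathcomp Require Import all_boot all_order all_algebra.
From mathcomp Require Import reals.
From mathcomp Require Import ring lra zify.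
Import Order.TTheory GRing.Theory Num.Theory.
Local Open Scope ring_scope.

Section Aux.
Variable R : realType.

Lemma sum_delta_l {T : finType} (a : T) (X : T -> R) :
  \sum_l ((a == l)%:R * X l) = X a.
Proof.
rewrite (bigD1 a) //= eqxx mul1r big1 ?addr0 // => l.
by rewrite eq_sym => /negbTE ->; rewrite mul0r.
Qed.

Lemma sum_delta_r {T : finType} (a : T) (X : T -> R) :
  \sum_l (X l * (l == a)%:R) = X a.
Proof.
rewrite -(sum_delta_l a X); apply: eq_bigr => l _.
by rewrite mulrC eq_sym.
Qed.

Definition emb {N m} (U : 'M[R]_m) (g : 'I_N -> option 'I_m) : 'M[R]_N :=
  \matrix_(i, j) match g i, g j with Some a, Some b => U a b
                   | _, _ => ((i == j)%:R) end.

Lemma reidx {N m} (g : 'I_N -> option 'I_m) (G : 'I_m -> R) :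
  (forall l1 l2 c, g l1 = Some c -> g l2 = Some c -> l1 = l2) ->
  (forall c, exists l, g l = Some c) ->
  \sum_l (match g l with Some c => G c | None => 0 end) = \sum_c G c.
Proof.
move=> inj surj.
transitivity (\sum_l \sum_c ((g l == Some c)%:R * G c)).
  apply: eq_bigr => l _; case E: (g l) => [c0|].
    rewrite -[LHS](sum_delta_l c0 G); apply: eq_bigr => c _.
    by congr (_%:R * _); apply/eqP/eqP => [[]|->].
  by rewrite big1 // => c _; rewrite mul0r.
rewrite exchange_big; apply: eq_bigr => c _.
have [l0 Hl0] := surj c.
transitivity (\sum_l ((l0 == l)%:R * G c)); last exact: sum_delta_l.
apply: eq_bigr => l _.
suff -> : (g l == Some c) = (l0 == l) by []. apply/idP/idP => [/eqP H|/eqP <-]; [apply/eqP; exact: inj Hl0 H | exact/eqP].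
Qed.

Lemma emb_orth {N m} (U : 'M[R]_m) (g : 'I_N -> option 'I_m) :
  (forall l1 l2 c, g l1 = Some c -> g l2 = Some c -> l1 = l2) ->
  (forall c, exists l, g l = Some c) ->
  U^T *m U = 1%:M -> (emb U g)^T *m emb U g = 1%:M.
Proof.
move=> inj surj HU; apply/matrixP => i j; rewrite !mxE.
under eq_bigr do rewrite !mxE.
case Ej: (g j) => [b|]; last first.
  transitivity (\sum_l ((match g l, g i with Some a, Some b => U a b
                   | _, _ => ((l == i)%:R) end) * (l == j)%:R)).
    by apply: eq_bigr => l _; congr (_ * _); case: (g l).
  by rewrite sum_delta_r Ej eq_sym; case: (g i).
case Ei: (g i) => [a|]; last first.
  transitivity (\sum_l ((i == l)%:R * (match g l, g j with Some a, Some b => U a b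
                   | _, _ => ((l == j)%:R) end))).
    by apply: eq_bigr => l _; rewrite Ej; case: (g l) => [?|]; rewrite eq_sym.
  by rewrite sum_delta_l Ei.
transitivity (\sum_l (match g l with Some c => U c a * U c b | None => 0 end)).
  apply: eq_bigr => l _; case El: (g l) => [c|] //.
  have /negbTE -> : l != i by apply/eqP => e; move: El; rewrite e Ei.
  by rewrite mul0r.
rewrite reidx //.
have H : \sum_c U c a * U c b = (a == b)%:R.
  move/matrixP: HU => /(_ a b); rewrite !mxE => <-.
  by apply: eq_bigr => c _; rewrite mxE.
rewrite H; suff -> : (a == b) = (i == j) by [].
apply/idP/idP => /eqP e; apply/eqP.
  by rewrite e in Ei; rewrite (inj _ _ _ Ei Ej).
by move: Ei; rewrite e Ej => -[].
Qed.


Lemma insub_val {p} {x : nat} {c : 'I_p} : insub x = Some c -> val c = x.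
Proof. by case: insubP => // u _ <- [->]. Qed.

Lemma insub_ord {p x : nat} (h : (x < p)%N) : insub x = Some (Ordinal h) :> option 'I_p.
Proof.
case: insubP => [u _ e|]; last by rewrite /= h.
by congr Some; apply: val_inj.
Qed.

Lemma insub_ordF {p x : nat} (h : (p <= x)%N) : insub x = None :> option 'I_p.
Proof. by case: insubP => // u hx _; move: hx; rewrite /= ltnNge h. Qed.

Definition gk (d k i : nat) : option 'I_(d.+1) :=
  obind (fun a => insub a) (vkidx d k i).

Lemma vkidx_lt {d k i a} : vkidx d k i = Some a -> (a < d.+1)%N.
Proof.
rewrite /vkidx; case: ifP => [h [<-]|_]; first by apply: ltnW.
by case: ifP => // _ [<-].
Qed.

Lemma vkidx_inj {d k i j a} : vkidx d k i = Some a -> vkidx d k j = Some a -> i = j.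
Proof.
rewrite /vkidx.
case: (ltnP i d) => h1; case: (ltnP j d) => h2;
  do ? case: eqP => ? //; move=> e1 e2; case: e1 => e1; case: e2 => e2; lia.
Qed.
Lemma Vk_emb d n k (U : 'M[R]_(d.+1)) :
  Vk n k U = emb U (fun i : 'I_(d.-1 + n) => gk d k i).
Proof.
apply/matrixP => i j; rewrite !mxE /gk.
case Ei: (vkidx d k i) => [a|]; case Ej: (vkidx d k j) => [b|] //=.
  rewrite /mxe (insub_ord (vkidx_lt Ei)) (insub_ord (vkidx_lt Ej)) //.
by case: (insub a).
Qed.

Lemma gk_inj d n k (l1 l2 : 'I_(d.-1 + n)) c :
  gk d k l1 = Some c -> gk d k l2 = Some c -> l1 = l2.
Proof.
rewrite /gk.
case E1: (vkidx d k l1) => [a1|] //= /insub_val h1.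
case E2: (vkidx d k l2) => [a2|] //= /insub_val h2.
apply: val_inj; apply: (@vkidx_inj d k _ _ (val c)); [by rewrite E1 h1 | by rewrite E2 h2].
Qed.

Lemma gk_surj d n k : (1 <= d)%N -> (1 <= k < n)%N ->
  forall c : 'I_(d.+1), exists l : 'I_(d.-1 + n), gk d k l = Some c.
Proof.
move=> hd /andP [hk1 hk2] c.
case: (ltnP c d) => hc.
  have hl : (c < d.-1 + n)%N by lia.
  exists (Ordinal hl); rewrite /gk /vkidx /= hc /=.
  by rewrite -[X in insub X]/(val c) valK.
have hl : ((d + k).-1 < d.-1 + n)%N by lia.
exists (Ordinal hl); rewrite /gk /vkidx /=.
have -> : ((d + k).-1 < d)%N = false by apply/negbTE; rewrite -leqNgt; lia.
rewrite eqxx /=.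
have e : (c : nat) = d by have := ltn_ord c; lia.
by rewrite -[X in insub X]e valK.
Qed.

Definition gn (d : nat) {N : nat} (i : 'I_N) : option 'I_d := insub (val i).

Lemma Vn_emb d n (U : 'M[R]_d) : Vn n U = emb U (@gn d (d.-1 + n)).
Proof.
apply/matrixP => i j; rewrite !mxE /gn /mxe.
case: (ltnP i d) => hi; case: (ltnP j d) => hj /=.
- by rewrite (insub_ord hi) (insub_ord hj).
- by rewrite (insub_ordF hj); case: insub.
- by rewrite (@insub_ordF d i hi).
- by rewrite (@insub_ordF d i hi).
Qed.

Lemma gn_inj d N (l1 l2 : 'I_N) c : gn d l1 = Some c -> gn d l2 = Some c -> l1 = l2.
Proof. by rewrite /gn => /insub_val h1 /insub_val h2; apply: val_inj; rewrite -h1 -h2. Qed.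

Lemma gn_surj d n : (1 <= n)%N -> forall c : 'I_d, exists l : 'I_(d.-1 + n), gn d l = Some c.
Proof.
move=> hn c; have hl : (c < d.-1 + n)%N by have := ltn_ord c; lia.
exists (Ordinal hl); by rewrite /gn /= valK.
Qed.


Lemma Pcol n (g : R) (m i : 'I_n) : (2 <= n)%N ->
  Pmat n g m i = ((m : nat) == (if (i:nat) == n.-1 then 0 else i.+1)%N)%:R
                 * (if (i:nat) == 0%N then g else 1).
Proof.
move=> hn; case: m => m hm; case: i => i hi /=.
case: ifP => /eqP e1; case: ifP => /eqP e2; rewrite mxE /=;
case: m hm => [|[|m]] hm; case: i hi e1 e2 => [|i] hi e1 e2 /=;
  do ? (case: eqP => ? /=); rewrite ?mulr1 ?mul1r ?mul0r //; try lia.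
Qed.


Lemma PtP n (g : R) : (2 <= n)%N -> `|g| <= 1 ->
  (Pmat n g)^T *m Pmat n g + (Crow n g)^T *m Crow n g = 1%:M.
Proof.
move=> hn hg; apply/matrixP => i j; rewrite !mxE big_ord1 !mxE.
under eq_bigr => l _ do rewrite mxE (Pcol _ _ _ _ hn) (Pcol _ _ _ _ hn).
set rho := fun (i : 'I_n) => if (i:nat) == n.-1 then 0%N else i.+1.
set cf := fun (i : 'I_n) => if (i:nat) == 0%N then g else 1.
have rho_lt : forall k : 'I_n, (rho k < n)%N.
  by move=> k; have := ltn_ord k; rewrite /rho; case: eqP; lia.
rewrite -/(rho i) -/(rho j) -/(cf i) -/(cf j).
pose o := Ordinal (rho_lt i).
rewrite (eq_bigr (fun l => (o == l)%:R * (((l : nat) == rho j)%:R * cf i * cf j))); last first.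
  move=> l _; have -> : (o == l) = ((l : nat) == rho i) by rewrite eq_sym.
  ring.
rewrite sum_delta_l /=.
have rinj : (rho i == rho j) = (i == j).
  apply/idP/idP => [/eqP e|/eqP ->//]; apply/eqP; apply: ord_inj; move: e.
  have := ltn_ord i; have := ltn_ord j; rewrite /rho; do 2 case: eqP; lia.
rewrite rinj.
have hs : Num.sqrt (1 - g^+2) * Num.sqrt (1 - g^+2) = 1 - g^+2.
  rewrite -expr2 sqr_sqrtr //.
  move: hg; rewrite ler_norml => /andP[h1 h2]; nra.
case: (eqVneq i j) => [<-|neq].
  rewrite /cf /=; case: eqP => _; rewrite ?mul1r ?mul0r ?addr0 ?mulr1 //.
  by rewrite hs; ring.
rewrite /= mul0r mul0r add0r.
case: eqP => ei; case: eqP => ej; rewrite ?mul0r ?mulr0 //.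
by case/eqP: neq; apply: ord_inj; rewrite ei ej.
Qed.


Lemma Vk_row d n k (U : 'M[R]_(d.+1)) (r l : 'I_(d.-1 + n)) :
  (d <= r)%N -> (r : nat) != (d + k).-1 -> Vk n k U r l = (r == l)%:R.
Proof. by move=> h1 h2; rewrite mxE /vkidx ltnNge h1 /= (negbTE h2). Qed.

Lemma Vk_col d n k (U : 'M[R]_(d.+1)) (l c : 'I_(d.-1 + n)) :
  (d <= c)%N -> (c : nat) != (d + k).-1 -> Vk n k U l c = (l == c)%:R.
Proof.
move=> h1 h2; rewrite mxE.
have -> : vkidx d k c = None by rewrite /vkidx ltnNge h1 /= (negbTE h2).
by case: vkidx.
Qed.

Lemma tri_struct d n (V : nat -> 'M[R]_(d.-1 + n)) :
  (forall k (r l : 'I_(d.-1 + n)), (1 <= k < n)%N -> (d <= r)%N ->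
      (r : nat) != (d + k).-1 -> V k r l = (r == l)%:R) ->
  (forall k (l c : 'I_(d.-1 + n)), (1 <= k < n)%N -> (d <= c)%N ->
      (c : nat) != (d + k).-1 -> V k l c = (l == c)%:R) ->
  forall j, (j <= n.-1)%N ->
  let T := \big[@mulmx R _ _ _/1%:M]_(n - j <= k < n) V k in
  (forall r c : 'I_(d.-1 + n), (d <= c < r)%N -> T r c = 0) /\
  (forall l c : 'I_(d.-1 + n), (d <= c)%N -> (c < (d + (n - j)).-1)%N ->
      T l c = (l == c)%:R).
Proof.
move=> F1 F2; elim=> [|j IH] hj T.
  rewrite /T subn0 big_geq //; split => [r c /andP [_ h]| l c _ _]; rewrite mxE //.
  have /negbTE -> : r != c by apply/eqP => e; rewrite e ltnn in h.
  by [].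
have hK : (n - j.+1 < n)%N by lia.
have hK1 : (1 <= n - j.+1 < n)%N by apply/andP; split; lia.
have eK : (n - j = (n - j.+1).+1)%N by lia.
have [IHa IHb] := IH (ltnW hj).
rewrite /= eK in IHa IHb.
rewrite /T big_ltn //.
split.
  move=> r c /andP [h1 h2]; rewrite mxE.
  case: (eqVneq (r : nat) (d + (n - j.+1)).-1) => hr.
    have hc : (c < (d + (n - j.+1).+1).-1)%N by lia.
    rewrite (eq_bigr (fun m => V (n - j.+1)%N r m * (m == c)%:R)); last first.
      by move=> m _; rewrite (IHb m c h1 hc).
    rewrite sum_delta_r F2 //; last by apply/eqP; lia.
    have /negbTE -> : r != c by apply/eqP => e; rewrite e ltnn in h2.
    by [].
  have hr' : (d <= r)%N by lia.
  rewrite (eq_bigr (fun m => (r == m)%:R * (\big[@mulmx R _ _ _/1%:M]_((n - j.+1).+1 <= k < n) V k) m c)); last first.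
    by move=> m _; rewrite (F1 _ r m hK1 hr' hr).
  rewrite sum_delta_l; apply: IHa; lia.
move=> l c h1 h2; rewrite mxE.
have hc : (c < (d + (n - j.+1).+1).-1)%N by lia.
rewrite (eq_bigr (fun m => V (n - j.+1)%N l m * (m == c)%:R)); last first.
  by move=> m _; rewrite (IHb m c h1 hc).
rewrite sum_delta_r F2 //; apply/eqP; lia.
Qed.


End Aux.

Theorem corollary7p3 (R : realType) (n d : nat)
    (Theta : 'cV[R]_d -> Prop) (Vt : 'cV[R]_d -> 'M[R]_(d.+1))
    (Phi : 'cV[R]_(d.-1) -> Prop) (Vd : 'cV[R]_(d.-1) -> 'M[R]_d)
    (gamma : R) (th : nat -> 'cV[R]_d) (ph : 'cV[R]_(d.-1)) :
  (2 <= n)%N -> (1 <= d)%N -> (d <= n)%N ->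
  ORP (d.+1) (d.+1) Theta Vt -> ORP d d Phi Vd ->
  `|gamma| <= 1 ->
  (forall k, (1 <= k < n)%N -> Theta (th k)) -> Phi ph ->
  let M : 'M[R]_(d.-1 + n, n) :=
    (\big[@mulmx R _ _ _ / 1%:M]_(1 <= k < n) Vk n k (Vt (th k)))
      *m Vn n (Vd ph) *m col_mx 0 (Pmat n gamma) in
  HOON (dsubmx M) (col_mx (Crow n gamma) (usubmx M)).
Proof.
move=> hn hd hdn [oV _] [oD _] hg hth hph M.
set B := \big[@mulmx R _ _ _ / 1%:M]_(1 <= k < n) Vk n k (Vt (th k)).
have VkO : forall k, (1 <= k < n)%N ->
    (Vk n k (Vt (th k)))^T *m Vk n k (Vt (th k)) = 1%:M.
  move=> k hk; rewrite Vk_emb; apply: emb_orth.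
  - by move=> l1 l2 c; apply: gk_inj.
  - exact: gk_surj.
  - exact: oV (hth k hk).
have VnO : (Vn n (Vd ph))^T *m Vn n (Vd ph) = 1%:M.
  rewrite Vn_emb; apply: emb_orth.
  - exact: gn_inj.
  - apply: gn_surj; lia.
  - exact: oD.
have BO : B^T *m B = 1%:M.
  rewrite /B big_seq; apply: (big_ind (fun X : 'M[R]_(d.-1 + n) => X^T *m X = 1%:M)).
  - by rewrite trmx1 mul1mx.
  - by move=> x y hx hy; rewrite trmx_mul -mulmxA (mulmxA x^T) hx mul1mx.
  - by move=> k; rewrite mem_index_iota => hk; apply: VkO.
set W := B *m Vn n (Vd ph).
have WO : W^T *m W = 1%:M.
  by rewrite /W trmx_mul -mulmxA (mulmxA B^T) BO mul1mx VnO.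
have Wtri : forall r c : 'I_(d.-1 + n), (d <= c < r)%N -> W r c = 0.
  move=> r c /andP [h1 h2]; rewrite mxE.
  have hc : (c < d)%N = false by apply/negbTE; rewrite -leqNgt.
  rewrite (eq_bigr (fun m => B r m * (m == c)%:R)); last first.
    by move=> m _; rewrite [Vn _ _ _ _]mxE hc andbF.
  rewrite sum_delta_r.
  have [Ta _] := @tri_struct R d n (fun k => Vk n k (Vt (th k)))
    (fun k r' l _ => @Vk_row R d n k _ r' l) (fun k l c' _ => @Vk_col R d n k _ l c')
    n.-1 (leqnn _).
  have e1 : (n - n.-1 = 1)%N by lia.
  rewrite e1 in Ta; apply: Ta; lia.
split.
- move=> i j hij; rewrite mxE /M -/B -/W mxE big_split_ord /=.
  rewrite big1 ?add0r; last first.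
    by move=> l _; rewrite col_mxEu [X in _ * X]mxE mulr0.
  apply: big1 => m _; rewrite col_mxEd (Pcol _ _ _ _ _ hn).
  case: eqP => hm; last by rewrite mul0r mulr0.
  rewrite Wtri ?mul0r //=.
  have := ltn_ord i; move: hm; case: eqP => hj hm; lia.
- move=> i j hi hj; rewrite mxE; case: splitP => [i' _|i' hi']; last by lia.
  by rewrite mxE; case: eqP => // e; rewrite e in hj.
- have hM : M^T *m M = (Pmat n gamma)^T *m Pmat n gamma.
    rewrite /M -/B -/W trmx_mul -mulmxA (mulmxA W^T) WO mul1mx.
    by rewrite tr_col_mx mul_row_col trmx0 mul0mx add0r.
  have hsplit : M^T *m M = (usubmx M)^T *m usubmx M + (dsubmx M)^T *m dsubmx M.
    by rewrite -[in LHS](vsubmxK M) tr_col_mx mul_row_col.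
  rewrite tr_col_mx mul_row_col -(@PtP R n gamma hn hg) -hM hsplit.
  rewrite opprD addrA addrK [X in X - _]addrC addrK //.
Qed.
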